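(* Let $R$ be a reflexive relation on $U$. The set of atoms of $\mathrm{DM(RS)}$ is $\{(\{x\}^{\blacktriangledown},\{x\}^{\blacktriangle})\mid x\in U,\ \{x\}^{\blacktriangle}\text{ is an atom of }\wp(U)^{\blacktriangle}\}$.
   Context: Let $U$ be a set and $R\subseteq U\times U$ a binary relation. For $x\in U$, $R(x)=\{y\in U\mid (x,y)\in R\}$ and $\breve R(x)=\{y\in U\mid (y,x)\in R\}$. For $X\subseteq U$: $X^{\blacktriangledown}=\{x\in U\mid R(x)\subseteq X\}$, $X^{\blacktriangle}=\{x\in U\mid R(x)\cap X\neq\emptyset\}$, $X^{\triangledown}=\{x\in U\mid \breve R(x)\subseteq X\}$, $X^{\vartriangle}=\{x\in U\mid \breve R(x)\cap X\neq\emptyset\}$; composites like $X^{\vartriangle\blacktriangledown}$ mean $(X^{\vartriangle})^{\blacktriangledown}$. $\wp(U)^{\blacktriangledown}=\{X^{\blacktriangledown}\mid X\subseteq U\}$, $\wp(U)^{\blacktriangle}=\{X^{\blacktriangle}\mid X\subseteq U\}$, complete lattices under $\subseteq$ with least element $\emptyset$. $\mathcal S=\{x\in U\mid |R(x)|=1\}$. $\mathrm{RS}=\{(X^{\blacktriangledown},X^{\blacktriangle})\mid X\subseteq U\}$ ordered coordinatewise; $\mathrm{DM(RS)}$ is its Dedekind–MacNeille completion, identified with $\{(A,B)\in\wp(U)^{\blacktriangledown}\times\wp(U)^{\blacktriangle}\mid A^{\vartriangle\blacktriangle}\subseteq B,\ A\cap\mathcal S=B\cap\mathcal S\}$ ordered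 coordinatewise (least element $(\emptyset,\emptyset)$), with meets $\bigwedge_i(X_i,Y_i)=(\bigcap_iX_i,(\bigcap_iY_i)^{\triangledown\blacktriangle})$ and joins $\bigvee_i(X_i,Y_i)=((\bigcup_iX_i)^{\vartriangle\blacktriangledown},\bigcup_iY_i)$. An atom of a lattice with least element $0$ is an element covering $0$. *)

(* Defs.v *)
(* subsets of U are predicates U -> Prop, compared extensionally. *)
Set Implicit Arguments.

Section Rough.
Variable U : Type.
Variable R : U -> U -> Prop.

Definition subset (X Y : U -> Prop) : Prop := forall x, X x -> Y x.
Definition seteq (X Y : U -> Prop) : Prop := forall x, X x <-> Y x.
Definition empty : U -> Prop := fun _ => False.
Definition single (x : U) : U -> Prop := fun y => y = x.

Definition lowR (X : U -> Prop) : U -> Prop := fun x => forall y, R x y -> X y.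
Definition upR (X : U -> Prop) : U -> Prop := fun x => exists y, R x y /\ X y.
Definition lowRi (X : U -> Prop) : U -> Prop := fun x => forall y, R y x -> X y.
Definition upRi (X : U -> Prop) : U -> Prop := fun x => exists y, R y x /\ X y.

Definition Sing : U -> Prop := fun x => exists y, R x y /\ forall z, R x z -> z = y.

(* membership in ℘(U)^▼ and ℘(U)^▲ (up to extensional equality of sets) *)
Definition in_low_sets (A : U -> Prop) : Prop := exists X, seteq A (lowR X).
Definition in_up_sets (B : U -> Prop) : Prop := exists X, seteq B (upR X).

Definition atom_up (B : U -> Prop) : Prop :=
  in_up_sets B /\ ~ subset B empty /\
  forall C, in_up_sets C -> subset C B -> subset C empty \/ subset B C.

Definition inDM (p : (U -> Prop) * (U -> Prop)) : Prop :=
  let (A, B) := p in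
  in_low_sets A /\ in_up_sets B /\ subset (upR (upRi A)) B /\
  (forall x, Sing x -> (A x <-> B x)).

Definition leDM (p q : (U -> Prop) * (U -> Prop)) : Prop :=
  subset (fst p) (fst q) /\ subset (snd p) (snd q).

Definition botDM : (U -> Prop) * (U -> Prop) := (empty, empty).

Definition atomDM (p : (U -> Prop) * (U -> Prop)) : Prop :=
  inDM p /\ ~ leDM p botDM /\
  forall q, inDM q -> leDM q p -> leDM q botDM \/ leDM p q.

End Rough.

(* Main.v *)
Require Import Defs.
From Stdlib Require Import Classical.

Section S.
Variable U : Type.
Variable R : U -> U -> Prop.
Hypothesis Hrefl : forall x : U, R x x.

Lemma dm_single y : inDM R (lowR R (single y), upR R (single y)).
Proof.
  split; [|split; [|split]].
  - exists (single y); intro; tauto.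
  - exists (single y); intro; tauto.
  - intros w [z [Hwz [v [Hvz Hv]]]]. unfold single in *.
    pose proof (Hv z Hvz) as e. rewrite e in Hwz. exists y; split; auto.
  - intros s [t [Hst Hu]]. unfold lowR, upR, single. split.
    + intros Ha. exists s. split; [apply Hrefl| apply Ha, Hrefl].
    + intros [t' [Ht' e]] t'' H.
      rewrite (Hu t'' H), <- (Hu t' Ht'). exact e.
Qed.

Lemma A_sub_B A B : inDM R (A,B) -> subset A B.
Proof.
  intros [_ [_ [H _]]] a Ha. apply H. exists a. split; [apply Hrefl|].
  exists a; split; auto.
Qed.

Lemma le_single A B y : inDM R (A,B) -> subset (upR R (single y)) B ->
  leDM (lowR R (single y), upR R (single y)) (A,B).
Proof.
  intros Hdm Hs. split; simpl; auto.
  intros z Hz. unfold lowR, single in Hz.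
  pose proof (Hz z (Hrefl z)) as e. rewrite e in Hz |- *.
  destruct Hdm as [_ [_ [_ HS]]]. apply HS.
  - exists y. split; auto.
  - apply Hs. exists y; split; [apply Hrefl|reflexivity].
Qed.

Lemma dm_ext A B A' B' : seteq A A' -> seteq B B' -> inDM R (A',B') -> inDM R (A,B).
Proof.
  intros HA HB [[X HX] [[Y HY] [H1 H2]]]. split; [|split; [|split]].
  - exists X; intro z; rewrite (HA z); apply HX.
  - exists Y; intro z; rewrite (HB z); apply HY.
  - intros w [z [Hwz [v [Hvz Hv]]]]. apply HB, H1. exists z; split; auto.
    exists v; split; auto. apply HA; auto.
  - intros x Hx. rewrite (HA x), (HB x). auto.
Qed.

End S.

Theorem mainTheorem3 (U : Type) (R : U -> U -> Prop)
  (Hrefl : forall x : U, R x x) :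
  forall p : (U -> Prop) * (U -> Prop),
    atomDM R p <->
    exists x : U, atom_up R (upR R (single x)) /\
      seteq (fst p) (lowR R (single x)) /\ seteq (snd p) (upR R (single x)).
Proof.
  intros [A B]. split.
  - intros [Hdm [Hnb Hcov]].
    assert (Hy : exists y, B y).
    { apply NNPP; intro Hne; apply Hnb; split; intros z Hz; apply Hne; exists z;
        [eapply A_sub_B; eauto | exact Hz]. }
    destruct Hy as [y Hy].
    pose proof Hdm as [_ [[X HX] _]].
    destruct (proj1 (HX y) Hy) as [x [Hyx Xx]].
    assert (Hsub : subset (upR R (single x)) B).
    { intros w [t [Hwt e]]. unfold single in e. subst t. apply HX. exists x; auto. }
    pose proof (@le_single U R Hrefl _ _ _ Hdm Hsub) as Hle.
    destruct (Hcov _ (@dm_single U R Hrefl x) Hle) as [[_ Hb] | [H1 H2]].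
    { exfalso. apply (Hb x). exists x; split; [apply Hrefl|reflexivity]. }
    simpl in H1, H2. destruct Hle as [H3 H4]. simpl in H3, H4.
    exists x. split; [|split; simpl; intro z; split; auto].
    split; [|split].
    + exists (single x); intro; tauto.
    + intro H. apply (H x). exists x; split; [apply Hrefl|reflexivity].
    + intros C [Y HY] HCsub.
      destruct (classic (exists c, C c)) as [[c Hc] | Hno].
      * right. destruct (proj1 (HY c) Hc) as [y' [Hcy' Yy']].
        assert (Hs' : subset (upR R (single y')) C).
        { intros w [t [Hwt e]]. unfold single in e. subst t. apply HY. exists y'; auto. }
        assert (Hs'' : subset (upR R (single y')) B).
        { intros w Hw. apply H4, HCsub, Hs', Hw. }
        pose proof (@le_single U R Hrefl _ _ _ Hdm Hs'') as Hle'.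
        destruct (Hcov _ (@dm_single U R Hrefl y') Hle') as [[_ Hb] | [_ H5]].
        { exfalso. apply (Hb y'). exists y'; split; [apply Hrefl|reflexivity]. }
        simpl in H5. intros z Hz. apply Hs', H5, H4, Hz.
      * left. intros z Hz. apply Hno. eauto.
  - intros [x [Hat [HA HB]]]. simpl in HA, HB.
    assert (Hdm : inDM R (A,B)) by (eapply dm_ext; eauto; apply dm_single; auto).
    split; [exact Hdm|split].
    + intros [_ Hb]. apply (Hb x). apply HB. exists x; split; [apply Hrefl|reflexivity].
    + intros [C D] Hq [HC HD]. simpl in HC, HD.
      destruct Hat as [_ [_ Hcov]].
      pose proof Hq as [_ [HDup [_ HS]]].
      destruct (Hcov D HDup (fun z Hz => proj1 (HB z) (HD z Hz))) as [H0 | H1].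
      * left. split; simpl; auto. intros z Hz. apply H0. eapply A_sub_B; eauto.
      * right. split; simpl.
        -- intros a Ha. pose proof (proj1 (HA a) Ha) as La.
           unfold lowR, single in La. pose proof (La a (Hrefl a)) as e. rewrite e in La, Ha |- *.
           apply HS.
           ++ exists x. split; auto.
           ++ apply H1. exists x; split; [apply Hrefl|reflexivity].
        -- intros b Hb. apply H1, HB, Hb.
Qed.
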